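(* Let $(D,v^* )$ be an instance of TFP that is special with respect to $a^*\in N_{\mathrm{out}}(v^* )$ and $b^*\in N_{\mathrm{in}}(v^* )$, and let $m=|N_{\mathrm{in}}(v^* )|=2^p$ (so $|V(D)|=4m=2^{p+2}$ and the knockout tournament has $p+2$ rounds). Write $A=N_{\mathrm{out}}(v^* )$ and $B=N_{\mathrm{in}}(v^* )$. Suppose $(D,v^* )$ is a yes-instance, let $\sigma$ be an arbitrary winning seeding for $v^*$, and let $\{M_1,\dots,M_{p+2}\}$ be its match set sequence. Then: (1) $V(M_{p+1})\cap B=\{b^*\}$; (2) $|V(M_{p+1})\cap A|=2$ and $a^*\in V(M_{p+1})$; (3) for every round $r\in\{1,\dots,p\}$, every match in $M_r$ is played either between two players of $A\cup\{v^*\}$ or between two players of $B$.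
   Context: A tournament is a digraph $D=(V,E)$ in which for every pair of distinct vertices $u,v$ exactly one of the arcs $(u,v),(v,u)$ is present; $(u,v)\in E$ means $u$ beats $v$. $N_{\mathrm{out}}(v)=\{u:(v,u)\in E\}$, $N_{\mathrm{in}}(v)=\{u:(u,v)\in E\}$. A knockout tournament on $n=2^c$ players is a complete binary tree with $n$ leaves; a seeding is a bijection from players to leaves; in each of the $\log_2 n$ rounds the winners of sibling subtrees play each other and the winner (according to $D$) advances; the last remaining player is the champion. A seeding is winning for $v^*$ if $v^*$ is the champion. The Tournament Fixing Problem (TFP): given a tournament $D$ with $|V(D)|$ a power of two and $v^*\in V(D)$, decide whether a winning seeding for $v^*$ exists; $(D,v^* )$ is a yes-instance if so. For a seeding, the match set $M_r\subseteq E(D)$ of round $r$ is the set of arcs $(u,v)$ such that $u$ beat $v$ in round $r$, and $V(M_r)$ is the set of players participating in round $r$; $\{M_1,\dots,M_{\log n}\}$ is the match set sequence. An instance $(D,v^* )$ is special with respect to $a^*\in N_{\mathrm{out}}(v^* )$ and $b^*\in N_{\mathrm{in}}(v^* )$ if: (i) $|N_{\mathrm{out}}(v^* )|=3|N_{\mathrm{in}}(v^* )|-1$ and $|N_{\mathrm{in}}(v^* )|=2^p$ for some integer $p\ge 0$; (ii) $(a^*,b^* )\in E(D)$; (iii) for every $a\in N_{\mathrm{out}}(v^* )$ and $b\in N_{\mathrm{in}}(v^* )$ with $(a,b)\neq(a^*,b^* )$, we have $(b,a)\in E(D)$. *)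

(* Defs.v *)
From mathcomp Require Import all_boot.
Set Implicit Arguments. Unset Strict Implicit. Unset Printing Implicit Defensive.

(* Tournaments on a finite vertex type V; D u v means "u beats v". *)
Definition tournament (V : finType) (D : rel V) : Prop :=
  (forall v, ~~ D v v) /\ (forall u v, u != v -> D u v != D v u).

Definition N_out (V : finType) (D : rel V) (v : V) : {set V} := [set u | D v u].
Definition N_in  (V : finType) (D : rel V) (v : V) : {set V} := [set u | D u v].

(* A seeding is represented by the list of players placed on the leaves
   0, 1, ..., n-1 of the complete binary tree (from left to right); it is a
   bijection iff it is a permutation of the player set.  Sibling leaves /
   subtrees at every level are consecutive pairs. *)
Definition seeding (V : finType) (s : seq V) : Prop := perm_eq s (enum V).

Fixpoint play_round (V : finType) (D : rel V) (s : seq V) : seq V :=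
  match s with
  | x :: y :: t => (if D x y then x else y) :: play_round D t
  | _ => s
  end.

Fixpoint round_arcs (V : finType) (D : rel V) (s : seq V) : seq (V * V) :=
  match s with
  | x :: y :: t => (if D x y then (x, y) else (y, x)) :: round_arcs D t
  | _ => [::]
  end.

Definition match_set (V : finType) (D : rel V) (s : seq V) (r : nat) : {set V * V} :=
  [set e | e \in round_arcs D (iter r.-1 (play_round D) s)].

Definition participants (V : finType) (M : {set V * V}) : {set V} :=
  [set x | [exists e in M, (e.1 == x) || (e.2 == x)]].

Definition winning_seeding (V : finType) (D : rel V) (v : V) (s : seq V) : Prop :=
  seeding s /\ exists c, #|V| = 2 ^ c /\ iter c (play_round D) s = [:: v].

Definition yes_instance (V : finType) (D : rel V) (v : V) : Prop :=
  exists s, winning_seeding D v s.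

Definition special (V : finType) (D : rel V) (v a b : V) : Prop :=
  [/\ a \in N_out D v, b \in N_in D v,
      #|N_out D v| = 3 * #|N_in D v| - 1 /\ (exists p, #|N_in D v| = 2 ^ p),
      D a b &
      forall a' b', a' \in N_out D v -> b' \in N_in D v -> (a', b') != (a, b) -> D b' a'].

(* Main.v *)
Require Import Defs.
From mathcomp Require Import all_boot zify.
Set Implicit Arguments. Unset Strict Implicit. Unset Printing Implicit Defensive.

Definition win (V : finType) (D : rel V) (x y : V) := if D x y then x else y.

Lemma play_round_cat (V : finType) (D : rel V) (s1 s2 : seq V) :
  ~~ odd (size s1) -> play_round D (s1 ++ s2) = play_round D s1 ++ play_round D s2.
Proof.
elim: (size s1).+1 {-2}s1 (ltnSn (size s1)) => // n IH [|x [|y t]] //= Hs Hodd.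
rewrite IH //; first by move: Hs => /=; lia.
by rewrite negbK in Hodd.
Qed.

Lemma round_arcs_cat (V : finType) (D : rel V) (s1 s2 : seq V) :
  ~~ odd (size s1) -> round_arcs D (s1 ++ s2) = round_arcs D s1 ++ round_arcs D s2.
Proof.
elim: (size s1).+1 {-2}s1 (ltnSn (size s1)) => // n IH [|x [|y t]] //= Hs Hodd.
rewrite IH //; first by move: Hs => /=; lia.
by rewrite negbK in Hodd.
Qed.

Lemma size_play_round (V : finType) (D : rel V) (s : seq V) :
  size (play_round D s) = uphalf (size s).
Proof.
elim: (size s).+1 {-2}s (ltnSn (size s)) => // n IH [|x [|y t]] //= Hs.
rewrite IH //; move: Hs => /=; lia.
Qed.

Lemma mem_play_round (V : finType) (D : rel V) (s : seq V) x :
  x \in play_round D s -> x \in s.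
Proof.
elim: (size s).+1 {-2}s (ltnSn (size s)) => // n IH [|x0 [|y t]] //= Hs.
rewrite !inE => /orP [/eqP ->|/IH].
  by case: (D x0 y); rewrite eqxx ?orbT.
by move=> H; rewrite H ?orbT //; move: Hs => /=; lia.
Qed.

Lemma mem_round_arcs (V : finType) (D : rel V) (s : seq V) e :
  e \in round_arcs D s -> e.1 \in s /\ e.2 \in s.
Proof.
elim: (size s).+1 {-2}s (ltnSn (size s)) => // n IH [|x0 [|y t]] //= Hs.
rewrite !inE => /orP [/eqP ->|/IH].
  by case: (D x0 y) => /=; rewrite ?inE ?eqxx ?orbT.
move=> H; have [H1 H2] := H ltac:(move: Hs => /=; lia).
by rewrite H1 H2 !orbT.
Qed.

Lemma mem_iter (V : finType) (D : rel V) (s : seq V) j x :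
  x \in iter j (play_round D) s -> x \in s.
Proof. by elim: j x => //= j IH x /mem_play_round /IH. Qed.

Lemma size_iter (V : finType) (D : rel V) (s : seq V) k j :
  size s = 2 ^ k -> j <= k -> size (iter j (play_round D) s) = 2 ^ (k - j).
Proof.
move=> Hs; elim: j => [|j IH] Hj; first by rewrite subn0.
rewrite iterS size_play_round IH; last lia.
have -> : k - j = (k - j.+1).+1 by lia.
by rewrite expnS mul2n uphalf_double.
Qed.

Lemma iter_cat (V : finType) (D : rel V) (s1 s2 : seq V) k j :
  size s1 = 2 ^ k -> j <= k ->
  iter j (play_round D) (s1 ++ s2) = iter j (play_round D) s1 ++ iter j (play_round D) s2.
Proof.
move=> Hs; elim: j => [|j IH] Hj //.
rewrite !iterS IH; last lia.
rewrite play_round_cat // (size_iter D Hs); last lia.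
rewrite oddX; apply/negP; case/orP => //; lia.
Qed.

Lemma arcs_iter_cat (V : finType) (D : rel V) (s1 s2 : seq V) k j :
  size s1 = 2 ^ k -> j < k ->
  round_arcs D (iter j (play_round D) (s1 ++ s2)) =
  round_arcs D (iter j (play_round D) s1) ++ round_arcs D (iter j (play_round D) s2).
Proof.
move=> Hs Hj; rewrite (iter_cat _ _ Hs); last lia.
rewrite round_arcs_cat // (size_iter D Hs); last lia.
rewrite oddX; apply/negP; case/orP => //; lia.
Qed.

Lemma split_iter (V : finType) (D : rel V) (t : seq V) k w :
  size t = 2 ^ k.+1 -> iter k.+1 (play_round D) t = [:: w] ->
  exists t1 t2 w1 w2, t = t1 ++ t2 /\ [/\ size t1 = 2 ^ k, size t2 = 2 ^ k,
     iter k (play_round D) t1 = [:: w1], iter k (play_round D) t2 = [:: w2] &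
     w = win D w1 w2].
Proof.
move=> Hs Hi.
have Hk : 2 ^ k < size t by rewrite Hs expnS; have := expn_gt0 2 k; lia.
set t1 := take (2 ^ k) t; set t2 := drop (2 ^ k) t.
have E : t = t1 ++ t2 by rewrite cat_take_drop.
have S1 : size t1 = 2 ^ k by rewrite size_take Hk.
have S2 : size t2 = 2 ^ k by rewrite size_drop Hs expnS; lia.
move: Hi; rewrite E iterS (iter_cat _ _ S1) //.
have := size_iter D S1 (leqnn k); have := size_iter D S2 (leqnn k).
rewrite subnn expn0.
case E1: (iter k (play_round D) t1) => [|w1 [|? ?]] //.
case E2: (iter k (play_round D) t2) => [|w2 [|? ?]] //.
move=> _ _ /= [<-]; by exists t1, t2, w1, w2; split.
Qed.

Lemma count_all (V : finType) (s : seq V) (B : {set V}) :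
  uniq s -> (forall x, x \in s) -> count (mem B) s = #|B|.
Proof.
move=> Us As; rewrite cardE -size_filter; apply/perm_size/uniq_perm.
- exact: filter_uniq.
- exact: enum_uniq.
by move=> x; rewrite mem_filter mem_enum As andbT.
Qed.

Lemma uniq_disj (V : eqType) (s1 s2 : seq V) x :
  uniq (s1 ++ s2) -> x \in s1 -> x \in s2 -> False.
Proof.
rewrite cat_uniq => /and3P [_ /hasPn H _] H1 /H; by rewrite H1.
Qed.

Lemma uniq_catLR (V : eqType) (s1 s2 : seq V) :
  uniq (s1 ++ s2) -> uniq s1 /\ uniq s2.
Proof. by rewrite cat_uniq => /and3P [-> _ ->]. Qed.

Lemma vs_notB (V : finType) (D : rel V) vs :
  tournament D -> vs \notin N_in D vs.
Proof. by case=> irr _; rewrite inE irr. Qed.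

Lemma vs_notA (V : finType) (D : rel V) vs :
  tournament D -> vs \notin N_out D vs.
Proof. by case=> irr _; rewrite inE irr. Qed.

Lemma B_notA (V : finType) (D : rel V) vs u :
  tournament D -> u \in N_in D vs -> u \notin N_out D vs.
Proof.
move=> [irr tt]; rewrite !inE => Hu.
case: (eqVneq u vs) => [E|ne]; first by move: Hu; rewrite E irr.
by have := tt _ _ ne; rewrite Hu; case: (D vs u).
Qed.

Lemma nonB_A (V : finType) (D : rel V) vs u :
  tournament D -> u != vs -> u \notin N_in D vs -> u \in N_out D vs.
Proof.
move=> [irr tt] ne; rewrite !inE => Hu.
by have := tt _ _ ne; move: Hu; case: (D u vs); case: (D vs u).
Qed.

Lemma win_mem (V : finType) (D : rel V) x y : win D x y = x \/ win D x y = y.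
Proof. by rewrite /win; case: (D x y); [left|right]. Qed.

Lemma win_sym (V : finType) (D : rel V) x y :
  tournament D -> x != y -> win D x y = win D y x.
Proof.
move=> [irr tt] ne; rewrite /win; have := tt _ _ ne.
by case: (D x y); case: (D y x).
Qed.

Lemma win_B (V : finType) (D : rel V) vs a b x y :
  tournament D -> special D vs a b ->
  y \in N_in D vs -> x \notin N_in D vs -> (x, y) != (a, b) ->
  win D x y = y /\ win D y x = y.
Proof.
move=> tD sp Hy Hx ne.
have nexy : x != y by apply/eqP => E; move: Hx; rewrite E Hy.
have Dyx : D y x.
  case: (eqVneq x vs) => [->|nev]; first by move: Hy; rewrite inE.
  have HxA := nonB_A tD nev Hx.
  by case: sp => _ _ _ _ Hall; apply: Hall.
have Dxy : ~~ D x y by case: tD => _ tt; have := tt _ _ nexy; rewrite Dyx; case: (D x y).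
by rewrite /win Dyx (negbTE Dxy).
Qed.

Lemma win_vs (V : finType) (D : rel V) vs x y :
  tournament D -> win D x y = vs ->
  (x = vs /\ y \notin N_in D vs) \/ (y = vs /\ x \notin N_in D vs).
Proof.
move=> tD; rewrite /win; case Dxy: (D x y) => E.
- left; split => //; subst x; apply/negP; rewrite inE => Dyv.
  have ne : y != vs by apply/eqP => E; move: Dyv; rewrite E; case: tD => irr _; rewrite (negbTE (irr vs)).
  by case: tD => _ tt; have := tt _ _ ne; rewrite Dyv Dxy.
- right; split => //; subst y; by rewrite inE Dxy.
Qed.

Lemma count_lt_size (V : eqType) (P : pred V) s x :
  x \in s -> ~~ P x -> count P s < size s.
Proof.
move=> xs Px; rewrite -(count_predC P s) -addn1 leq_add2l.
by rewrite -has_count; apply/hasP; exists x.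
Qed.

Lemma b_closure (V : finType) (D : rel V) vs a b k t w :
  tournament D -> special D vs a b ->
  size t = 2 ^ k -> iter k (play_round D) t = [:: w] ->
  has (mem (N_in D vs)) t -> ~~ ((a \in t) && (b \in t)) -> w \in N_in D vs.
Proof.
move=> tD sp; elim: k t w => [|k IH] t w Hs Hi.
  by move: Hi => /= ->; rewrite /= orbF.
have [t1 [t2 [w1 [w2 [-> [S1 S2 I1 I2 ->]]]]]] := split_iter Hs Hi.
have w1t : w1 \in t1 by apply: (mem_iter (j:=k) (D:=D)); rewrite I1 inE.
have w2t : w2 \in t2 by apply: (mem_iter (j:=k) (D:=D)); rewrite I2 inE.
rewrite has_cat !mem_cat => Hh Hab.
have nab1 : ~~ ((a \in t1) && (b \in t1)).
  by apply: contra Hab => /andP[-> ->].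
have nab2 : ~~ ((a \in t2) && (b \in t2)).
  by apply: contra Hab => /andP[-> ->]; rewrite !orbT.
case h1: (has (mem (N_in D vs)) t1); case h2: (has (mem (N_in D vs)) t2);
  rewrite ?h1 ?h2 in Hh => //.
- have B1 := IH _ _ S1 I1 h1 nab1; have B2 := IH _ _ S2 I2 h2 nab2.
  by case: (win_mem D w1 w2) => ->.
- have B1 := IH _ _ S1 I1 h1 nab1.
  have nB2 : w2 \notin N_in D vs.
    by apply/negP => HB; move/negbT/hasPn: h2 => /(_ _ w2t) /negP; apply; exact: HB.
  have ne : (w2, w1) != (a, b).
    apply/negP => /eqP [E2 E1]; move: Hab; rewrite -E2 -E1 w1t w2t orbT.
    by [].
  by have [_ ->] := win_B tD sp B1 nB2 ne.
- have B2 := IH _ _ S2 I2 h2 nab2.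
  have nB1 : w1 \notin N_in D vs.
    by apply/negP => HB; move/negbT/hasPn: h1 => /(_ _ w1t) /negP; apply; exact: HB.
  have ne : (w1, w2) != (a, b).
    apply/negP => /eqP [E1 E2]; move: Hab; rewrite -E2 -E1 w1t w2t orbT.
    by [].
  by have [-> _] := win_B tD sp B2 nB1 ne.
Qed.

Lemma has_count0 (V : eqType) (P : pred V) s : ~~ has P s -> count P s = 0.
Proof. by rewrite has_count; lia. Qed.

Lemma combine (V : finType) (D : rel V) vs a b k (t1 t2 : seq V) :
  tournament D -> size t2 = 2 ^ k -> uniq (t1 ++ t2) ->
  (~~ has (mem (N_in D vs)) t1 \/
     [/\ a \in t1, b \in t1 & 2 * count (mem (N_in D vs)) t1 < 2 ^ k]) ->
  (has (mem (N_in D vs)) t2 -> a \in t2 /\ b \in t2) ->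
  a \notin N_in D vs ->
  ~~ has (mem (N_in D vs)) (t1 ++ t2) \/
     [/\ a \in t1 ++ t2, b \in t1 ++ t2 & 2 * count (mem (N_in D vs)) (t1 ++ t2) < 2 ^ k.+1].
Proof.
move=> tD S2 U H1 H2 naB.
rewrite has_cat count_cat !mem_cat expnS.
case: (boolP (has (mem (N_in D vs)) t2)) => h2.
- have [a2 b2] := H2 h2.
  have na1 : a \notin t1 by apply/negP => a1; exact: (uniq_disj U a1 a2).
  case: H1 => [h1|[a1]]; last by rewrite a1 in na1.
  have c1 := has_count0 h1.
  have := count_lt_size (P := mem (N_in D vs)) a2 naB; rewrite S2 => lt.
  right; rewrite a2 b2 !orbT; split => //; rewrite c1 add0n ltn_pmul2l //.
- have c2 := has_count0 h2.
  case: H1 => [h1|[a1 b1 lt]]; first by left; rewrite orbF.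
  right; rewrite a1 b1; split => //; rewrite c2 addn0.
  move: lt; move: (2 ^ k) (count _ t1) => K C; lia.
Qed.

Lemma bound (V : finType) (D : rel V) vs a b k t :
  tournament D -> special D vs a b ->
  size t = 2 ^ k -> uniq t -> iter k (play_round D) t = [:: vs] ->
  ~~ has (mem (N_in D vs)) t \/
     [/\ a \in t, b \in t & 2 * count (mem (N_in D vs)) t < 2 ^ k].
Proof.
move=> tD sp.
have naB : a \notin N_in D vs.
  by case: sp => Ha _ _ _ _; apply/negP => /(B_notA tD); rewrite Ha.
elim: k t => [|k IH] t Hs U Hi.
  by left; move: Hi => /= ->; rewrite /= orbF (vs_notB vs tD).
have [t1 [t2 [w1 [w2 [Et [S1 S2 I1 I2 Ew]]]]]] := split_iter Hs Hi.
subst t.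
have w1t : w1 \in t1 by apply: (mem_iter (j:=k) (D:=D)); rewrite I1 inE.
have w2t : w2 \in t2 by apply: (mem_iter (j:=k) (D:=D)); rewrite I2 inE.
have [U1 U2] := uniq_catLR U.
case: (win_vs tD (esym Ew)) => [[E1 nB2]|[E2 nB1]].
- subst w1; apply: combine => //; first exact: IH.
  move=> h2; apply/andP; apply: contraR nB2 => nab.
  exact: (b_closure tD sp S2 I2 h2 nab).
- subst w2.
  have U' : uniq (t2 ++ t1) by rewrite uniq_catC.
  have := combine (t2:=t1) tD S1 U' (IH _ S2 U2 I2) _ naB.
  rewrite !has_cat !count_cat !mem_cat orbC addnC (orbC (a \in t2)) (orbC (b \in t2)).
  apply => h1; apply/andP; apply: contraR nB1 => nab.
  exact: (b_closure tD sp S1 I1 h1 nab).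
Qed.

Definition unif (V : finType) (D : rel V) vs (q : seq V) :=
  (forall x, x \in q -> x \in vs |: N_out D vs) \/ (forall x, x \in q -> x \in N_in D vs).

Lemma nonB_unif (V : finType) (D : rel V) vs (q : seq V) :
  tournament D -> (forall x, x \in q -> x \notin N_in D vs) -> unif D vs q.
Proof.
move=> tD H; left => x /H nB; rewrite in_setU1.
case: (eqVneq x vs) => //= ne; exact: nonB_A.
Qed.

Lemma iter_mem1 (V : finType) (D : rel V) k (q : seq V) w :
  iter k (play_round D) q = [:: w] -> w \in q.
Proof. by move=> I; apply: (mem_iter (j:=k) (D:=D)); rewrite I inE. Qed.

Lemma quarter (V : finType) (D : rel V) vs a b p (qc qd : seq V) wc wd :
  tournament D -> special D vs a b ->
  size qc = 2 ^ p -> size qd = 2 ^ p ->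
  iter p (play_round D) qc = [:: wc] -> iter p (play_round D) qd = [:: wd] ->
  uniq (qc ++ qd) -> count (mem (N_in D vs)) (qc ++ qd) = 2 ^ p ->
  a \in qc -> win D wc wd \notin N_in D vs ->
  [/\ wc = a, wd = b, (forall x, x \in qc -> x \notin N_in D vs) &
      (forall x, x \in qd -> x \in N_in D vs)].
Proof.
move=> tD sp Sc Sd Ic Id U C ac nBw.
have naB : a \notin N_in D vs.
  by case: sp => Ha _ _ _ _; apply/negP => /(B_notA tD); rewrite Ha.
have nad : a \notin qd by apply/negP => ad; exact: (uniq_disj U ac ad).
have wcq := iter_mem1 Ic; have wdq := iter_mem1 Id.
have ltc := count_lt_size (P := mem (N_in D vs)) ac naB.
move: C; rewrite count_cat => C.
have hd : has (mem (N_in D vs)) qd.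
  by rewrite has_count; move: ltc C; rewrite Sc; move: (2 ^ p) (count _ qc) (count _ qd) => K X Y; lia.
have wdB : wd \in N_in D vs.
  by apply: (b_closure tD sp Sd Id hd); rewrite (negbTE nad).
have Ew : win D wc wd = wc.
  by case: (win_mem D wc wd) => // E; move: nBw; rewrite E wdB.
have wcB : wc \notin N_in D vs by rewrite -Ew.
have [Ec Ed] : wc = a /\ wd = b.
  case: (eqVneq (wc, wd) (a, b)) => [[-> ->]|ne] //.
  have [E _] := win_B tD sp wdB wcB ne.
  by move: wcB; rewrite -Ew E wdB.
subst wc wd.
have nbc : b \notin qc by apply/negP => bc; exact: (uniq_disj U bc wdq).
have hc : ~~ has (mem (N_in D vs)) qc.
  apply/negP => hc; move: wcB; rewrite (b_closure tD sp Sc Ic hc) //.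
  by rewrite (negbTE nbc) andbF.
split => //.
- by move=> x xc; apply/negP => xB; move/hasPn: hc => /(_ _ xc) /negP; apply; exact: xB.
- have c0 := has_count0 hc.
  have : all (mem (N_in D vs)) qd by rewrite all_count Sd; move: C c0; move: (2 ^ p) (count _ qc) (count _ qd) => K X Y; lia.
  by move/allP.
Qed.

Lemma join_iter (V : finType) (D : rel V) p (q1 q2 : seq V) w1 w2 :
  size q1 = 2 ^ p -> iter p (play_round D) q1 = [:: w1] -> iter p (play_round D) q2 = [:: w2] ->
  iter p.+1 (play_round D) (q1 ++ q2) = [:: win D w1 w2].
Proof. by move=> S I1 I2; rewrite iterS (iter_cat _ _ S) // I1 I2. Qed.

Lemma size_cat2 (V : finType) p (q1 q2 : seq V) :
  size q1 = 2 ^ p -> size q2 = 2 ^ p -> size (q1 ++ q2) = 2 ^ p.+1.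
Proof. by move=> S1 S2; rewrite size_cat S1 S2 expnS mul2n addnn. Qed.

Lemma core (V : finType) (D : rel V) vs a b p (qa qb qc qd : seq V) wa wb wc wd :
  tournament D -> special D vs a b ->
  size qa = 2 ^ p -> size qb = 2 ^ p -> size qc = 2 ^ p -> size qd = 2 ^ p ->
  iter p (play_round D) qa = [:: wa] -> iter p (play_round D) qb = [:: wb] ->
  iter p (play_round D) qc = [:: wc] -> iter p (play_round D) qd = [:: wd] ->
  win D wa wb = vs -> win D wc wd \notin N_in D vs ->
  uniq (qa ++ qb ++ qc ++ qd) ->
  count (mem (N_in D vs)) (qa ++ qb ++ qc ++ qd) = 2 ^ p ->
  exists x0, [/\ x0 \in N_out D vs, x0 != a,
    (forall x, (x \in [:: wa; wb; wc; wd]) = (x \in [:: vs; x0; a; b])) &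
    [/\ unif D vs qa, unif D vs qb, unif D vs qc & unif D vs qd]].
Proof.
move=> tD sp Sa Sb Sc Sd Ia Ib Ic Id Eab nBcd U C.
have naB : a \notin N_in D vs.
  by case: sp => Ha _ _ _ _; apply/negP => /(B_notA tD); rewrite Ha.
have Sh := size_cat2 Sa Sb; have Sh' := size_cat2 Sc Sd.
have Ih := join_iter Sa Ia Ib; rewrite Eab in Ih.
have Ih' := join_iter Sc Ic Id.
have U' : uniq ((qa ++ qb) ++ (qc ++ qd)) by rewrite -catA.
have [Uh Uh'] := uniq_catLR U'.
have C' : count (mem (N_in D vs)) (qa ++ qb) + count (mem (N_in D vs)) (qc ++ qd) = 2 ^ p.
  by rewrite -count_cat -catA.
have cl : has (mem (N_in D vs)) (qc ++ qd) -> a \in qc ++ qd /\ b \in qc ++ qd.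
  move=> h; apply/andP; apply: contraR nBcd => nab.
  exact: (b_closure tD sp Sh' Ih' h nab).
have nh : ~~ has (mem (N_in D vs)) (qa ++ qb).
  case: (bound tD sp Sh Uh Ih) => // [[a1 _ lt]].
  have na' : a \notin qc ++ qd by apply/negP => a2; exact: (uniq_disj U' a1 a2).
  have nh' : ~~ has (mem (N_in D vs)) (qc ++ qd).
    by apply/negP => /cl [a2 _]; rewrite a2 in na'.
  move: C' lt; rewrite (has_count0 nh') expnS.
  move: (2 ^ p) (count _ (qa ++ qb)) => K X; lia.
have c0 := has_count0 nh.
have hh' : has (mem (N_in D vs)) (qc ++ qd).
  rewrite has_count; move: C'; rewrite c0; have := expn_gt0 2 p.
  move: (2 ^ p) (count _ (qc ++ qd)) => K X; lia.
have [a2 _] := cl hh'.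
have [Ucd _] := uniq_catLR Uh'.
have Ccd : count (mem (N_in D vs)) (qc ++ qd) = 2 ^ p by move: C'; rewrite c0.
have [Hcd [uc ud]] : (wc = a /\ wd = b \/ wc = b /\ wd = a) /\ (unif D vs qc /\ unif D vs qd).
  move: a2; rewrite mem_cat => /orP [ac|ad].
  - have [E1 E2 H1 H2] := quarter tD sp Sc Sd Ic Id Uh' Ccd ac nBcd.
    by split; [left | split; [exact: nonB_unif | right]].
  - have Udc : uniq (qd ++ qc) by rewrite uniq_catC.
    have Cdc : count (mem (N_in D vs)) (qd ++ qc) = 2 ^ p by rewrite count_cat addnC -count_cat.
    have ne : wc != wd.
      apply/eqP => E; apply: (uniq_disj Uh' (iter_mem1 Ic)); rewrite E; exact: iter_mem1 Id.
    have nB' : win D wd wc \notin N_in D vs by rewrite -win_sym.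
    have [E1 E2 H1 H2] := quarter tD sp Sd Sc Id Ic Udc Cdc ad nB'.
    by split; [right | split; [right | exact: nonB_unif]].
have nBab : forall x, x \in qa ++ qb -> x \notin N_in D vs.
  by move=> x xh; apply/negP => xB; move/hasPn: nh => /(_ _ xh) /negP; apply; exact: xB.
have ua : unif D vs qa by apply: nonB_unif => // x xa; apply: nBab; rewrite mem_cat xa.
have ub : unif D vs qb by apply: nonB_unif => // x xb; apply: nBab; rewrite mem_cat xb orbT.
have wan := iter_mem1 Ia; have wbn := iter_mem1 Ib.
have [Ua _] := uniq_catLR Uh.
have nex : forall x0, x0 \in qa ++ qb -> x0 != a.
  by move=> x0 x0h; apply/eqP => E; subst x0; exact: (uniq_disj U' x0h a2).
case: (win_vs tD Eab) => [[E nB]|[E nB]].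
- subst wa; exists wb.
  have nev : wb != vs by apply/eqP => E; subst wb; exact: (uniq_disj Uh wan wbn).
  split => //; first exact: nonB_A.
  + by apply: nex; rewrite mem_cat wbn orbT.
  + move=> x; case: Hcd => [[-> ->]|[-> ->]]; rewrite !inE;
    by case: (x == vs); case: (x == wb); case: (x == a); case: (x == b).
- subst wb; exists wa.
  have nev : wa != vs by apply/eqP => E; subst wa; exact: (uniq_disj Uh wan wbn).
  split => //; first exact: nonB_A.
  + by apply: nex; rewrite mem_cat wan.
  + move=> x; case: Hcd => [[-> ->]|[-> ->]]; rewrite !inE;
    by case: (x == vs); case: (x == wa); case: (x == a); case: (x == b).
Qed.

Lemma part4 (V : finType) (D : rel V) x1 y1 x2 y2 x :
  (x \in participants [set e | e \in round_arcs D [:: x1; y1; x2; y2]]) =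
  (x \in [:: x1; y1; x2; y2]).
Proof.
rewrite /participants inE; apply/existsP/idP.
- move=> [e /andP [He /orP [] /eqP <-]]; rewrite inE in He;
  by have [] := mem_round_arcs He.
- rewrite !inE => /or4P [] /eqP ->.
  + exists (if D x1 y1 then (x1, y1) else (y1, x1)); rewrite !inE /=.
    by case: (D x1 y1); rewrite /= !eqxx ?orbT.
  + exists (if D x1 y1 then (x1, y1) else (y1, x1)); rewrite !inE /=.
    by case: (D x1 y1); rewrite /= !eqxx ?orbT.
  + exists (if D x2 y2 then (x2, y2) else (y2, x2)); rewrite !inE /=.
    by case: (D x2 y2); rewrite /= !eqxx ?orbT.
  + exists (if D x2 y2 then (x2, y2) else (y2, x2)); rewrite !inE /=.
    by case: (D x2 y2); rewrite /= !eqxx ?orbT.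
Qed.

Lemma unif_arc (V : finType) (D : rel V) vs (q : seq V) j e :
  unif D vs q -> e \in round_arcs D (iter j (play_round D) q) ->
  (e.1 \in vs |: N_out D vs /\ e.2 \in vs |: N_out D vs) \/
  (e.1 \in N_in D vs /\ e.2 \in N_in D vs).
Proof.
move=> [H|H] /mem_round_arcs [/mem_iter h1 /mem_iter h2]; [left|right]; split; exact: H.
Qed.

Lemma finish (V : finType) (D : rel V) vs a b p (s q1 q2 q3 q4 : seq V) w1 w2 w3 w4 x0 :
  tournament D -> special D vs a b ->
  s = q1 ++ q2 ++ q3 ++ q4 ->
  size q1 = 2 ^ p -> size q2 = 2 ^ p -> size q3 = 2 ^ p ->
  iter p (play_round D) q1 = [:: w1] -> iter p (play_round D) q2 = [:: w2] ->
  iter p (play_round D) q3 = [:: w3] -> iter p (play_round D) q4 = [:: w4] ->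
  x0 \in N_out D vs -> x0 != a ->
  (forall x, (x \in [:: w1; w2; w3; w4]) = (x \in [:: vs; x0; a; b])) ->
  [/\ unif D vs q1, unif D vs q2, unif D vs q3 & unif D vs q4] ->
  [/\ participants (match_set D s p.+1) :&: N_in D vs = [set b],
      #|participants (match_set D s p.+1) :&: N_out D vs| = 2,
      a \in participants (match_set D s p.+1) &
      forall r, 1 <= r <= p -> forall e, e \in match_set D s r ->
        (e.1 \in vs |: N_out D vs /\ e.2 \in vs |: N_out D vs) \/
        (e.1 \in N_in D vs /\ e.2 \in N_in D vs)].
Proof.
move=> tD sp -> S1 S2 S3 I1 I2 I3 I4 x0A nea Hm [u1 u2 u3 u4].
have [aA bB] : a \in N_out D vs /\ b \in N_in D vs by case: sp.
have aB : a \notin N_in D vs by apply/negP => /(B_notA tD); rewrite aA.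
have x0B : x0 \notin N_in D vs by apply/negP => /(B_notA tD); rewrite x0A.
have vB := vs_notB vs tD; have vA := vs_notA vs tD.
have bA := B_notA tD bB.
have Hit : iter p (play_round D) (q1 ++ q2 ++ q3 ++ q4) = [:: w1; w2; w3; w4].
  by rewrite (iter_cat _ _ S1) // (iter_cat _ _ S2) // (iter_cat _ _ S3) // I1 I2 I3 I4.
have HP : forall x, (x \in participants (match_set D (q1 ++ q2 ++ q3 ++ q4) p.+1)) =
                    (x \in [:: vs; x0; a; b]).
  by move=> x; rewrite /match_set /= Hit part4 Hm.
split.
- apply/setP => x; rewrite in_setI HP in_set1 !in_cons in_nil.
  case: (eqVneq x b) => [->|nxb]; first by rewrite bB !orbT.
  case: (eqVneq x vs) => [->|_]; first by rewrite (negbTE vB) andbF.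
  case: (eqVneq x x0) => [->|_]; first by rewrite (negbTE x0B) andbF.
  by case: (eqVneq x a) => [->|_] //; rewrite (negbTE aB) andbF.
- have -> : participants (match_set D (q1 ++ q2 ++ q3 ++ q4) p.+1) :&: N_out D vs = [set x0; a].
    apply/setP => x; rewrite in_setI HP in_set2 !in_cons in_nil.
    case: (eqVneq x a) => [->|_]; first by rewrite aA !orbT.
    case: (eqVneq x x0) => [->|_]; first by rewrite x0A !orbT.
    case: (eqVneq x vs) => [->|_]; first by rewrite (negbTE vA).
    by case: (eqVneq x b) => [->|_] //; rewrite (negbTE bA).
  by rewrite cards2 nea.
- by rewrite HP !inE eqxx !orbT.
- move=> r /andP [r1 rp] e; rewrite /match_set inE.
  have j : r.-1 < p by lia.
  rewrite (arcs_iter_cat _ _ S1 j) (arcs_iter_cat _ _ S2 j) (arcs_iter_cat _ _ S3 j) !mem_cat.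
  by case/or4P; apply: unif_arc.
Qed.

Theorem lemma1 (V : finType) (D : rel V) (vs a b : V) (p : nat) (s : seq V) :
  tournament D ->
  special D vs a b ->
  #|N_in D vs| = 2 ^ p ->
  yes_instance D vs ->
  winning_seeding D vs s ->
  [/\ participants (match_set D s p.+1) :&: N_in D vs = [set b],
      #|participants (match_set D s p.+1) :&: N_out D vs| = 2,
      a \in participants (match_set D s p.+1) &
      forall r, 1 <= r <= p -> forall e, e \in match_set D s r ->
        (e.1 \in vs |: N_out D vs /\ e.2 \in vs |: N_out D vs) \/
        (e.1 \in N_in D vs /\ e.2 \in N_in D vs)].
Proof.
move=> tD sp Hp _ [Hperm [c [Hc Hit]]].
have [aA bB [cA _] _ _] := sp.
have HC : ~: N_in D vs = vs |: N_out D vs.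
  apply/setP => x; rewrite in_setC in_setU1.
  case: (eqVneq x vs) => [->|ne] /=; first by rewrite (vs_notB vs tD).
  apply/idP/idP; first exact: nonB_A.
  by move=> xA; apply/negP => /(B_notA tD); rewrite xA.
have HV : #|V| = 2 ^ p.+2.
  rewrite -(cardsC (N_in D vs)) HC cardsU1 (vs_notA vs tD) cA Hp !expnS.
  have := expn_gt0 2 p; move: (2 ^ p) => K; lia.
have Ec : c = p.+2 by apply/eqP; rewrite -(eqn_exp2l _ _ (ltnSn 1)) -Hc HV.
subst c.
have Ss : size s = 2 ^ p.+2 by rewrite (perm_size Hperm) -cardT.
have Us : uniq s by rewrite (perm_uniq Hperm) enum_uniq.
have As : forall x, x \in s by move=> x; rewrite (perm_mem Hperm) mem_enum.
have Cs := count_all (N_in D vs) Us As; rewrite Hp in Cs.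
have [h1 [h2 [W1 [W2 [Es [S1 S2 I1 I2 EW]]]]]] := split_iter Ss Hit.
have [qa [qb [wa [wb [E1 [Sa Sb Ia Ib Ewa]]]]]] := split_iter S1 I1.
have [qc [qd [wc [wd [E2 [Sc Sd Ic Id Ewc]]]]]] := split_iter S2 I2.
subst s h1 h2 W1 W2.
have Ess : (qa ++ qb) ++ qc ++ qd = qa ++ qb ++ qc ++ qd by rewrite -catA.
rewrite Ess in Us Cs.
case: (win_vs tD (esym EW)) => [[Eab nB]|[Ecd nB]].
- have [x0 [x0A nea Hm [ua ub uc ud]]] :=
    core tD sp Sa Sb Sc Sd Ia Ib Ic Id Eab nB Us Cs.
  exact: (finish tD sp Ess Sa Sb Sc Ia Ib Ic Id x0A nea Hm).
- have Us' : uniq (qc ++ qd ++ qa ++ qb).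
    by move: Us; rewrite catA uniq_catC -catA.
  have Cs' : count (mem (N_in D vs)) (qc ++ qd ++ qa ++ qb) = 2 ^ p.
    by move: Cs; rewrite !count_cat; move: (count _ qa) (count _ qb) (count _ qc) (count _ qd) => A B C0 D0; lia.
  have [x0 [x0A nea Hm [uc ud ua ub]]] :=
    core tD sp Sc Sd Sa Sb Ic Id Ia Ib Ecd nB Us' Cs'.
  apply: (finish tD sp Ess Sa Sb Sc Ia Ib Ic Id x0A nea) => //.
  move=> x; rewrite -Hm !in_cons in_nil.
  by case: (x == wa); case: (x == wb); case: (x == wc); case: (x == wd).
Qed.
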